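(* Fix an environment $(\mathcal{S},\mathcal{A},\mathcal{T},d_0,\_,\gamma)$ and a set $\Pi$ of stationary policies containing a nonempty open subset of $\Pi^+$. Then every pair of reward functions $(\mathcal{R},\mathcal{R}')$ with $J_{\mathcal{R}},J_{\mathcal{R}'}$ both non-trivial on $\Pi$ and not equivalent on $\Pi$ is hackable relative to $\Pi$ and this environment.
   Context: Setting: finite $\mathcal{S}$, finite $\mathcal{A}$ with $|\mathcal{A}|>1$, transition model $\mathcal{T}:\mathcal{S}\times\mathcal{A}\to\Delta(\mathcal{S})$, $d_0\in\Delta(\mathcal{S})$, $\gamma\in[0,1)$, all states reachable; an environment is an MDP without its reward; rewards are $\mathcal{R}:\mathcal{S}\times\mathcal{A}\to\mathbb{R}$. Stationary policies are identified with $\Delta(\mathcal{A})^{|\mathcal{S}|}\subset\mathbb{R}^{\mathcal{S}\times\mathcal{A}}$; $\Pi^+$ is the set with $\pi(a\mid s)>0$ for all $s,a$, and ''open'' means open in $\Pi^+$. $J_{\mathcal{R}}(\pi)=\mathbb{E}\big[\sum_{t\ge0}\gamma^t\mathcal{R}(s_t,a_t)\big]$ with $s_0\sim d_0$, $a_t\sim\pi(\cdot\mid s_t)$, $s_{t+1}\sim\mathcal{T}(\cdot\mid s_t,a_t)$. $J$ is trivial on $\Pi$ if constant on $\Pi$; $J_1,J_2$ equivalent on $\Pi$ if for all $\pi,\pi'\in\Pi$, $J_1(\pi)\ge J_1(\pi')\iff J_2(\pi)\ge J_2(\pi')$. $(\mathcal{R},\mathcal{R}')$ is hackable relative to $\Pi$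 if there are $\pi,\pi'\in\Pi$ with $J_{\mathcal{R}}(\pi)>J_{\mathcal{R}}(\pi')$ and $J_{\mathcal{R}'}(\pi')>J_{\mathcal{R}'}(\pi)$. *)

(* Defs.v *)
From HB Require Import structures.
From mathcomp Require Import all_boot all_order all_algebra.
From mathcomp Require Import all_classical all_reals all_analysis.
Set Implicit Arguments. Unset Strict Implicit. Unset Printing Implicit Defensive.
Import Order.TTheory GRing.Theory Num.Theory.
Local Open Scope ring_scope.
Local Open Scope classical_set_scope.

Section MDP.
Variables (R : realType) (S A : finType).

Definition is_distr (T : finType) (p : T -> R) :=
  (forall x, 0 <= p x) /\ \sum_(x : T) p x = 1.

Definition is_transition (Tr : S -> A -> S -> R) :=
  forall s a, is_distr (Tr s a).

Definition is_policy (pi : S -> A -> R) := forall s, is_distr (pi s).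

Definition Pplus : set (S -> A -> R) :=
  [set pi | is_policy pi /\ forall s a, 0 < pi s a].

Definition pdist (pi pi' : S -> A -> R) : R :=
  \big[Num.max/0]_(sa : S * A) `|pi sa.1 sa.2 - pi' sa.1 sa.2|.

Definition open_in_Pplus (U : set (S -> A -> R)) :=
  U `<=` Pplus /\
  forall pi, U pi -> exists2 e : R, 0 < e &
    forall pi', Pplus pi' -> pdist pi pi' < e -> U pi'.

(* distribution of s_t when s_0 ~ d0, a_t ~ pi(.|s_t), s_{t+1} ~ T(.|s_t,a_t) *)
Fixpoint state_dist (Tr : S -> A -> S -> R) (d0 : S -> R) (pi : S -> A -> R)
    (t : nat) : S -> R :=
  match t with
  | 0%N => d0
  | t'.+1 => fun s' => \sum_(s : S) \sum_(a : A)
              state_dist Tr d0 pi t' s * pi s a * Tr s a s'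
  end.

Definition all_reachable (Tr : S -> A -> S -> R) (d0 : S -> R) :=
  forall s, exists pi, is_policy pi /\ exists t, 0 < state_dist Tr d0 pi t s.

(* J_R(pi) = E[ sum_t gamma^t R(s_t,a_t) ] = sum_t gamma^t E[R(s_t,a_t)] *)
Definition J (Tr : S -> A -> S -> R) (d0 : S -> R) (gamma : R)
    (Rw : S -> A -> R) (pi : S -> A -> R) : R :=
  limn (fun n => \sum_(0 <= t < n) (gamma ^+ t *
     \sum_(s : S) \sum_(a : A) state_dist Tr d0 pi t s * pi s a * Rw s a)).

Definition trivial_on (Pi : set (S -> A -> R)) (f : (S -> A -> R) -> R) :=
  forall pi pi', Pi pi -> Pi pi' -> f pi = f pi'.

Definition equivalent_on (Pi : set (S -> A -> R)) (f g : (S -> A -> R) -> R) :=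
  forall pi pi', Pi pi -> Pi pi' -> (f pi' <= f pi <-> g pi' <= g pi).

Definition hackable (Tr : S -> A -> S -> R) (d0 : S -> R) (gamma : R)
    (Pi : set (S -> A -> R)) (Rw Rw' : S -> A -> R) :=
  exists pi pi', [/\ Pi pi, Pi pi',
     J Tr d0 gamma Rw pi' < J Tr d0 gamma Rw pi &
     J Tr d0 gamma Rw' pi < J Tr d0 gamma Rw' pi'].

End MDP.

(* Main.v *)
Require Import Defs.
From HB Require Import structures.
From mathcomp Require Import all_boot all_order all_algebra.
From mathcomp Require Import all_classical all_reals all_analysis.
From mathcomp Require Import ring lra.
Import Order.TTheory GRing.Theory Num.Theory.
Local Open Scope ring_scope.
Local Open Scope classical_set_scope.
Set Implicit Arguments. Unset Strict Implicit. Unset Printing Implicit Defensive.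
Lemma sumS (R : realType) (S : finType) (F : S -> R) :
  \sum_(s : S) F s = \sum_(i < #|S|) F (enum_val i).
Proof.
rewrite (reindex (@enum_val S predT)) //=.
exists enum_rank => x _; [exact: enum_valK | exact: enum_rankK].
Qed.

Lemma solve_lin (R : realType) (S : finType) (K : S -> S -> R) :
  (forall x : S -> R, (forall s', x s' = \sum_s x s * K s s') -> forall s, x s = 0) ->
  forall b : S -> R,
  (exists x : S -> R, forall s', x s' = b s' + \sum_s x s * K s s') /\
  (exists y : S -> R, forall s, y s = b s + \sum_s' K s s' * y s').
Proof.
move=> hK b.
pose n := #|S|.
pose M : 'M[R]_n := \matrix_(i, j) ((i == j)%:R - K (enum_val i) (enum_val j)).
have rowE (v : 'rV[R]_n) j : (v *m M) 0 j = v 0 j - \sum_(i < n) v 0 i * K (enum_val i) (enum_val j).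
  rewrite !mxE (bigD1 j) //= mxE eqxx.
  rewrite (eq_bigr (fun i => - (v 0 i * K (enum_val i) (enum_val j)))); last first.
    by move=> i /negPf hij; rewrite mxE hij sub0r mulrN.
  rewrite [X in _ = _ - X](bigD1 j) //= sumrN mulrBr mulr1 opprD addrA.
  by [].
have colE (v : 'cV[R]_n) i : (M *m v) i 0 = v i 0 - \sum_(j < n) K (enum_val i) (enum_val j) * v j 0.
  rewrite !mxE (bigD1 i) //= mxE eqxx.
  rewrite (eq_bigr (fun j => - (K (enum_val i) (enum_val j) * v j 0))); last first.
    by move=> j /negPf hij; rewrite mxE eq_sym hij sub0r mulNr.
  rewrite [X in _ = _ - X](bigD1 i) //= sumrN mulrBl mul1r opprD addrA.
  by [].
have Mu : M \in unitmx.
  rewrite unitmxE unitfE; apply/negP => /det0P [w wn0 hw].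
  have h0 : forall s, w 0 (enum_rank s) = 0.
    apply: hK => s'.
    have := rowE w (enum_rank s'); rewrite hw mxE => /eqP; rewrite eq_sym subr_eq0 => /eqP ->.
    rewrite enum_rankK [RHS]sumS; apply: eq_bigr => i _; by rewrite enum_valK.
  move/negP: wn0; apply; apply/eqP/rowP => j; rewrite mxE.
  by rewrite -(enum_valK j) h0.
split.
- pose bv : 'rV[R]_n := \row_j b (enum_val j).
  pose xv := bv *m invmx M.
  exists (fun s => xv 0 (enum_rank s)) => s'.
  have : (xv *m M) 0 (enum_rank s') = bv 0 (enum_rank s') by rewrite -mulmxA mulVmx // mulmx1.
  rewrite rowE => /eqP; rewrite subr_eq addrC => /eqP ->.
  rewrite [bv _ _]mxE enum_rankK addrC; congr (_ + _); rewrite [RHS]sumS.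
  by apply: eq_bigr => i _; rewrite enum_valK.
- pose bv : 'cV[R]_n := \col_j b (enum_val j).
  pose yv := invmx M *m bv.
  exists (fun s => yv (enum_rank s) 0) => s.
  have : (M *m yv) (enum_rank s) 0 = bv (enum_rank s) 0 by rewrite mulmxA mulmxV // mul1mx.
  rewrite colE => /eqP; rewrite subr_eq addrC => /eqP ->.
  rewrite [bv _ _]mxE enum_rankK addrC; congr (_ + _); rewrite [RHS]sumS.
  by apply: eq_bigr => i _; rewrite enum_valK.
Qed.

Definition Pm (R : realType) (S A : finType) (Tr : S -> A -> S -> R) (pi : S -> A -> R) (s s' : S) : R :=
  \sum_a pi s a * Tr s a s'.
Definition rv (R : realType) (S A : finType) (pi : S -> A -> R) (Rw : S -> A -> R) (s : S) : R :=
  \sum_a pi s a * Rw s a.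

Lemma Pm_distr (R : realType) (S A : finType) (Tr : S -> A -> S -> R) (pi : S -> A -> R) :
  is_transition Tr -> is_policy pi -> forall s, is_distr (Pm Tr pi s).
Proof.
move=> hTr hpi s; split.
- move=> s'; apply: sumr_ge0 => a _; apply: mulr_ge0; [exact: (hpi s).1 | exact: (hTr s a).1].
- rewrite /Pm exchange_big /= -(hpi s).2; apply: eq_bigr => a _.
  by rewrite -mulr_sumr (hTr s a).2 mulr1.
Qed.

Lemma sd_S (R : realType) (S A : finType) (Tr : S -> A -> S -> R) (d0 : S -> R) (pi : S -> A -> R) t s' :
  state_dist Tr d0 pi t.+1 s' = \sum_s state_dist Tr d0 pi t s * Pm Tr pi s s'.
Proof.
rewrite /= /Pm; apply: eq_bigr => s _; rewrite mulr_sumr; apply: eq_bigr => a _.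
by rewrite mulrA.
Qed.

Lemma sd_distr (R : realType) (S A : finType) (Tr : S -> A -> S -> R) (d0 : S -> R) (pi : S -> A -> R) :
  is_transition Tr -> is_distr d0 -> is_policy pi ->
  forall t, is_distr (state_dist Tr d0 pi t).
Proof.
move=> hTr hd0 hpi; elim=> [|t [IH1 IH2]] //; split.
- move=> s'; rewrite sd_S; apply: sumr_ge0 => s _; apply: mulr_ge0 => //.
  exact: (Pm_distr hTr hpi s).1.
- under eq_bigr do rewrite sd_S.
  rewrite exchange_big /= -IH2; apply: eq_bigr => s _.
  by rewrite -mulr_sumr (Pm_distr hTr hpi s).2 mulr1.
Qed.

Lemma dot_step (R : realType) (S A : finType) (Tr : S -> A -> S -> R) (d0 : S -> R) (pi : S -> A -> R) t (V : S -> R) :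
  \sum_s' state_dist Tr d0 pi t.+1 s' * V s' =
  \sum_s state_dist Tr d0 pi t s * \sum_s' Pm Tr pi s s' * V s'.
Proof.
under eq_bigr do rewrite sd_S mulr_suml.
rewrite exchange_big /=; apply: eq_bigr => s _; rewrite mulr_sumr.
by apply: eq_bigr => s' _; rewrite mulrA.
Qed.

Lemma J_cvg (R : realType) (S A : finType) (Tr : S -> A -> S -> R) (d0 : S -> R) (gamma : R) (Rw pi : S -> A -> R) (V : S -> R) :
  is_transition Tr -> is_distr d0 -> is_policy pi -> 0 <= gamma -> gamma < 1 ->
  (forall s, V s = rv pi Rw s + gamma * \sum_s' Pm Tr pi s s' * V s') ->
  (fun n => \sum_(0 <= t < n) (gamma ^+ t *
     \sum_(s : S) \sum_(a : A) state_dist Tr d0 pi t s * pi s a * Rw s a))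
    @ \oo --> \sum_s d0 s * V s.
Proof.
move=> hTr hd0 hpi hg0 hg1 hV.
pose e n := \sum_s state_dist Tr d0 pi n s * V s.
have ce t : \sum_(s : S) \sum_(a : A) state_dist Tr d0 pi t s * pi s a * Rw s a =
    \sum_s state_dist Tr d0 pi t s * rv pi Rw s.
  apply: eq_bigr => s _; rewrite /rv mulr_sumr; apply: eq_bigr => a _; by rewrite mulrA.
have eS t : gamma * e t.+1 = e t - \sum_s state_dist Tr d0 pi t s * rv pi Rw s.
  rewrite /e dot_step mulr_sumr -sumrB; apply: eq_bigr => s _.
  by rewrite mulrCA -mulrBr [in X in _ * (X - _)]hV addrC addKr.
have ps n : \sum_(0 <= t < n) (gamma ^+ t *
     \sum_(s : S) \sum_(a : A) state_dist Tr d0 pi t s * pi s a * Rw s a) =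
     \sum_s d0 s * V s - gamma ^+ n * e n.
  elim: n => [|n IH]; first by rewrite big_nil /e /= expr0 mul1r subrr.
  rewrite big_nat_recr //= IH ce exprSr -mulrA eS mulrBr opprB addrA.
  by rewrite addrAC.
rewrite (_ : (fun n => _) = (fun n => \sum_s d0 s * V s - gamma ^+ n * e n)); last first.
  by apply: funext => n; rewrite ps.
rewrite -[X in _ --> X]subr0; apply: cvgB; first exact: cvg_cst.
pose C := \sum_s `|V s|.
have eb n : `|e n| <= C.
  rewrite /e /C; apply: le_trans (ler_norm_sum _ _ _) _; apply: ler_sum => s _.
  have [h1 h2] := sd_distr hTr hd0 hpi n.
  rewrite normrM ger0_norm //; apply: ler_piMl => //.
  rewrite -h2 (bigD1 s) //= lerDl; apply: sumr_ge0 => *; exact: h1.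
have gc : (fun n => gamma ^+ n * C) @ \oo --> 0.
  rewrite -(mul0r C); apply: cvgMr_tmp; apply: cvg_expr; rewrite ger0_norm //.
apply: (@squeeze_cvgr _ _ _ _ (fun n => - (gamma ^+ n * C)) (fun n => gamma ^+ n * C)).
- apply: filterE => n; rewrite -ler_norml normrM ger0_norm ?exprn_ge0 //.
  by apply: ler_wpM2l; [exact: exprn_ge0|].
- by rewrite -oppr0; apply: cvgN.
- exact: gc.
Qed.

Lemma J_eqV (R : realType) (S A : finType) (Tr : S -> A -> S -> R) (d0 : S -> R) (gamma : R) (Rw pi : S -> A -> R) (V : S -> R) :
  is_transition Tr -> is_distr d0 -> is_policy pi -> 0 <= gamma -> gamma < 1 ->
  (forall s, V s = rv pi Rw s + gamma * \sum_s' Pm Tr pi s s' * V s') ->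
  J Tr d0 gamma Rw pi = \sum_s d0 s * V s.
Proof.
move=> h1 h2 h3 h4 h5 hV; rewrite /J; have := J_cvg h1 h2 h3 h4 h5 hV. move/cvg_lim. move=> ->. by []. exact: norm_hausdorff.
Qed.


Lemma kernel0 (R : realType) (S A : finType) (Tr : S -> A -> S -> R) (pi : S -> A -> R) (gamma : R) :
  is_transition Tr -> is_policy pi -> 0 <= gamma -> gamma < 1 ->
  forall x : S -> R, (forall s', x s' = \sum_s x s * (gamma * Pm Tr pi s s')) -> forall s, x s = 0.
Proof.
move=> hTr hpi hg0 hg1 x hx.
have hle : \sum_s `|x s| <= gamma * \sum_s `|x s|.
  rewrite mulr_sumr.
  apply: le_trans (_ : \sum_s' \sum_s `|x s| * (gamma * Pm Tr pi s s') <= _).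
    apply: ler_sum => s' _; rewrite [in X in X <= _]hx; apply: le_trans (ler_norm_sum _ _ _) _.
    apply: ler_sum => s _; rewrite normrM; apply: ler_wpM2l => //; rewrite ger0_norm //.
    apply: mulr_ge0 => //; exact: (Pm_distr hTr hpi s).1.
  rewrite exchange_big /=; apply: ler_sum => s _.
  rewrite -mulr_sumr; under eq_bigr do rewrite mulrC.
  by rewrite -mulr_suml (Pm_distr hTr hpi s).2 mul1r mulrC.
have h0 : \sum_s `|x s| = 0.
  apply/eqP; rewrite eq_le sumr_ge0 // andbT.
  have : (1 - gamma) * \sum_s `|x s| <= 0 by rewrite mulrBl mul1r subr_le0.
  by rewrite pmulr_rle0 // subr_gt0.
move=> s; apply/eqP; rewrite -normr_eq0; apply/eqP.
by move/eqP: h0; rewrite psumr_eq0 // => /allP /(_ s (mem_index_enum s)) /eqP.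
Qed.

Lemma exists_V (R : realType) (S A : finType) (Tr : S -> A -> S -> R) (pi : S -> A -> R) (gamma : R) :
  is_transition Tr -> is_policy pi -> 0 <= gamma -> gamma < 1 ->
  forall b : S -> R, exists V : S -> R, forall s, V s = b s + gamma * \sum_s' Pm Tr pi s s' * V s'.
Proof.
move=> hTr hpi hg0 hg1 b.
have [_ [y hy]] := solve_lin (kernel0 hTr hpi hg0 hg1) b.
exists y => s; rewrite hy mulr_sumr; congr (_ + _); apply: eq_bigr => s' _; by rewrite mulrA.
Qed.

Lemma exists_mu (R : realType) (S A : finType) (Tr : S -> A -> S -> R) (pi : S -> A -> R) (gamma : R) :
  is_transition Tr -> is_policy pi -> 0 <= gamma -> gamma < 1 ->
  forall b : S -> R, exists mu : S -> R, forall s', mu s' = b s' + gamma * \sum_s mu s * Pm Tr pi s s'.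
Proof.
move=> hTr hpi hg0 hg1 b.
have [[x hx] _] := solve_lin (kernel0 hTr hpi hg0 hg1) b.
exists x => s; rewrite hx mulr_sumr; congr (_ + _); apply: eq_bigr => s' _; by rewrite mulrCA.
Qed.

Lemma swapPV (R : realType) (S : finType) (gamma : R) (mu V : S -> R) (P : S -> S -> R) :
  \sum_s mu s * (gamma * \sum_s' P s s' * V s') =
  \sum_s' (gamma * \sum_s mu s * P s s') * V s'.
Proof.
under eq_bigr do rewrite mulr_sumr mulr_sumr.
rewrite exchange_big /=; apply: eq_bigr => s' _.
rewrite mulr_sumr mulr_suml; apply: eq_bigr => s _; by rewrite !mulrA (mulrC (mu s)).
Qed.

Lemma J_mu (R : realType) (S A : finType) (Tr : S -> A -> S -> R) (d0 : S -> R) (gamma : R) (Rw pi : S -> A -> R) (mu : S -> R) :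
  is_transition Tr -> is_distr d0 -> is_policy pi -> 0 <= gamma -> gamma < 1 ->
  (forall s', mu s' = d0 s' + gamma * \sum_s mu s * Pm Tr pi s s') ->
  J Tr d0 gamma Rw pi = \sum_s mu s * rv pi Rw s.
Proof.
move=> hTr hd0 hpi hg0 hg1 hmu.
have [V hV] := exists_V hTr hpi hg0 hg1 (rv pi Rw).
rewrite (J_eqV hTr hd0 hpi hg0 hg1 hV).
have e1 : \sum_s mu s * rv pi Rw s = \sum_s mu s * V s - \sum_s mu s * (gamma * \sum_s' Pm Tr pi s s' * V s').
  rewrite -sumrB; apply: eq_bigr => s _; by rewrite -mulrBr [in V s]hV addrK.
have e2 : \sum_s d0 s * V s = \sum_s mu s * V s - \sum_s' (gamma * \sum_s mu s * Pm Tr pi s s') * V s'.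
  rewrite -sumrB; apply: eq_bigr => s _; by rewrite -mulrBl [in mu s]hmu addrK.
by rewrite e1 e2 swapPV.
Qed.

Definition qv (R : realType) (S A : finType) (Tr : S -> A -> S -> R) (gamma : R) (Rw : S -> A -> R) (V : S -> R) (s : S) (a : A) : R :=
  Rw s a + gamma * \sum_s' Tr s a s' * V s'.

Lemma qv_avg (R : realType) (S A : finType) (Tr : S -> A -> S -> R) (gamma : R) (Rw pi : S -> A -> R) (V : S -> R) s :
  \sum_a pi s a * qv Tr gamma Rw V s a = rv pi Rw s + gamma * \sum_s' Pm Tr pi s s' * V s'.
Proof.
rewrite /qv; under eq_bigr do rewrite mulrDr.
rewrite big_split /=; congr (_ + _).
under eq_bigr do rewrite mulrCA.
rewrite -mulr_sumr; congr (_ * _); rewrite (eq_bigr (fun a => \sum_s' pi s a * (Tr s a s' * V s'))); last by move=> a _; rewrite mulr_sumr.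
rewrite exchange_big /=; apply: eq_bigr => s' _; rewrite /Pm mulr_suml; apply: eq_bigr => a _; by rewrite mulrA.
Qed.

Lemma PDL (R : realType) (S A : finType) (Tr : S -> A -> S -> R) (d0 : S -> R) (gamma : R) (Rw pi0 pi1 : S -> A -> R) (V0 mu1 : S -> R) :
  is_transition Tr -> is_distr d0 -> is_policy pi0 -> is_policy pi1 -> 0 <= gamma -> gamma < 1 ->
  (forall s, V0 s = rv pi0 Rw s + gamma * \sum_s' Pm Tr pi0 s s' * V0 s') ->
  (forall s', mu1 s' = d0 s' + gamma * \sum_s mu1 s * Pm Tr pi1 s s') ->
  J Tr d0 gamma Rw pi1 - J Tr d0 gamma Rw pi0 =
  \sum_s mu1 s * \sum_a (pi1 s a - pi0 s a) * qv Tr gamma Rw V0 s a.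
Proof.
move=> hTr hd0 hp0 hp1 hg0 hg1 hV hmu.
rewrite (J_eqV hTr hd0 hp0 hg0 hg1 hV) (J_mu _ hTr hd0 hp1 hg0 hg1 hmu).
have e1 s : \sum_a (pi1 s a - pi0 s a) * qv Tr gamma Rw V0 s a =
   (rv pi1 Rw s + gamma * \sum_s' Pm Tr pi1 s s' * V0 s') - V0 s.
  under eq_bigr do rewrite mulrBl.
  by rewrite sumrB !qv_avg -hV.
under [RHS]eq_bigr do rewrite e1 mulrBr mulrDr.
rewrite sumrB big_split /= swapPV.
have e2 : \sum_s d0 s * V0 s = \sum_s mu1 s * V0 s - \sum_s' (gamma * \sum_s mu1 s * Pm Tr pi1 s s') * V0 s'.
  rewrite -sumrB; apply: eq_bigr => s _; by rewrite -mulrBl [in mu1 s]hmu addrK.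
rewrite e2; set a := \sum_s _ * rv _ _ _; set b := \sum_s' _ * _; set c := \sum_s _ * V0 _.
by rewrite opprB addrA addrAC -addrA addrC.
Qed.


Lemma le_sum_one (R : realType) (I : finType) (F : I -> R) j :
  (forall i, 0 <= F i) -> F j <= \sum_i F i.
Proof. move=> h; rewrite (bigD1 j) //= lerDl; exact: sumr_ge0. Qed.

Lemma occ_bound (R : realType) (S : finType) (P0 P1 : S -> S -> R) (d0 mu0 mu1 : S -> R) (gamma : R) :
  (forall s s', 0 <= P1 s s') -> (forall s, \sum_s' P1 s s' = 1) -> 0 <= gamma -> gamma < 1 ->
  (forall s', mu0 s' = d0 s' + gamma * \sum_s mu0 s * P0 s s') ->
  (forall s', mu1 s' = d0 s' + gamma * \sum_s mu1 s * P1 s s') ->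
  (1 - gamma) * \sum_s `|mu1 s - mu0 s| <= gamma * \sum_s' `|\sum_s mu0 s * (P1 s s' - P0 s s')|.
Proof.
move=> hP1 hP1s hg0 hg1 h0 h1.
pose B s' := \sum_s mu0 s * (P1 s s' - P0 s s').
have he s' : mu1 s' - mu0 s' = gamma * (\sum_s (mu1 s - mu0 s) * P1 s s' + B s').
  rewrite [mu1 s']h1 [mu0 s']h0 /B -big_split /=.
  rewrite [in RHS](eq_bigr (fun s => mu1 s * P1 s s' - mu0 s * P0 s s')); last by move=> s _; ring.
  rewrite sumrB; ring.
have hb s' : `|mu1 s' - mu0 s'| <= gamma * (\sum_s `|mu1 s - mu0 s| * P1 s s' + `|B s'|).
  rewrite he normrM ger0_norm //; apply: ler_wpM2l => //.
  apply: le_trans (ler_normD _ _) _; rewrite lerD2r.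
  apply: le_trans (ler_norm_sum _ _ _) _; apply: ler_sum => s _.
  by rewrite normrM (ger0_norm (hP1 s s')).
have : \sum_s `|mu1 s - mu0 s| <= gamma * (\sum_s `|mu1 s - mu0 s| + \sum_s' `|B s'|).
  apply: le_trans (ler_sum _ (fun s' _ => hb s')) _.
  rewrite -mulr_sumr big_split /=; apply: ler_wpM2l => //; rewrite lerD2r exchange_big /=.
  apply: ler_sum => s _; by rewrite -mulr_sumr hP1s mulr1.
rewrite /B; lra.
Qed.

Lemma reach_pos (R : realType) (S A : finType) (Tr : S -> A -> S -> R) (d0 : S -> R) (pi pi0 : S -> A -> R) :
  is_transition Tr -> is_distr d0 -> is_policy pi -> is_policy pi0 -> (forall s a, 0 < pi0 s a) ->
  forall t s, 0 < state_dist Tr d0 pi t s -> 0 < state_dist Tr d0 pi0 t s.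
Proof.
move=> hTr hd0 hp hp0 hpos; elim=> [|t IH] s' //=.
have hd := sd_distr hTr hd0 hp t; have hd' := sd_distr hTr hd0 hp0 t.
move=> hsum.
have [s [a hsa]] : exists s a, 0 < state_dist Tr d0 pi t s * pi s a * Tr s a s'.
  apply/not_existsP => hn; move: hsum; apply/negP; rewrite -leNgt.
  apply: sumr_le0 => s _; apply: sumr_le0 => a _.
  by rewrite leNgt; apply/negP => h; apply: (hn s); exists a.
have nn (x y z : R) : 0 <= x -> 0 <= y -> 0 <= z -> 0 < x * y * z -> [/\ 0 < x, 0 < y & 0 < z].
  move=> hx hy hz hxyz; rewrite !lt0r hx hy hz !andbT.
  by move: hxyz; rewrite lt0r !mulf_eq0 negb_or negb_or => /andP [/andP [/andP [-> ->] ->] _].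
have [h1 h2 h3] := nn _ _ _ (hd.1 s) ((hp s).1 a) ((hTr s a).1 s') hsa.
apply: lt_le_trans (_ : state_dist Tr d0 pi0 t s * pi0 s a * Tr s a s' <= _).
  by rewrite !mulr_gt0 // IH.
apply: le_trans (_ : \sum_a state_dist Tr d0 pi0 t s * pi0 s a * Tr s a s' <= _).
  apply: le_sum_one => a'; apply: mulr_ge0; [apply: mulr_ge0|]; [exact: hd'.1|exact: (hp0 s).1|exact: (hTr s a').1].
apply: le_sum_one => s''; apply: sumr_ge0 => a' _.
apply: mulr_ge0; [apply: mulr_ge0|]; [exact: hd'.1|exact: (hp0 s'').1|exact: (hTr s'' a').1].
Qed.


Lemma sum_delta (R : realType) (I : finType) (F : I -> R) j :
  \sum_i F i * (i == j)%:R = F j.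
Proof.
rewrite (bigD1 j) //= eqxx mulr1 big1 ?addr0 // => i /negPf ->; by rewrite mulr0.
Qed.

Lemma mu_pos (R : realType) (S A : finType) (Tr : S -> A -> S -> R) (d0 : S -> R) (gamma : R) (pi0 : S -> A -> R) (mu0 : S -> R) :
  is_transition Tr -> is_distr d0 -> all_reachable Tr d0 -> is_policy pi0 -> (forall s a, 0 < pi0 s a) ->
  0 < gamma -> gamma < 1 ->
  (forall s', mu0 s' = d0 s' + gamma * \sum_s mu0 s * Pm Tr pi0 s s') ->
  forall s, 0 < mu0 s.
Proof.
move=> hTr hd0 hreach hp0 hpos hg0 hg1 hmu s.
have [pi [hp [t ht]]] := hreach s.
have ht0 := reach_pos hTr hd0 hp hp0 hpos ht.
pose Rs (s'' : S) (a : A) : R := (s'' == s)%:R.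
have hg0' : 0 <= gamma by exact: ltW.
have hJ := J_mu Rs hTr hd0 hp0 hg0' hg1 hmu.
have rvE s'' : rv pi0 Rs s'' = (s'' == s)%:R.
  by rewrite /rv /Rs -mulr_suml (hp0 s'').2 mul1r.
have hJ' : J Tr d0 gamma Rs pi0 = mu0 s.
  by rewrite hJ (eq_bigr (fun s'' => mu0 s'' * (s'' == s)%:R)) ?sum_delta // => s'' _; rewrite rvE.
have [V hV] := exists_V hTr hp0 hg0' hg1 (rv pi0 Rs).
have hc := J_cvg hTr hd0 hp0 hg0' hg1 hV.
set u := fun n => _ in hc.
have cE k : \sum_(s0 : S) \sum_(a : A) state_dist Tr d0 pi0 k s0 * pi0 s0 a * Rs s0 a =
    state_dist Tr d0 pi0 k s.
  rewrite -(sum_delta (state_dist Tr d0 pi0 k) s); apply: eq_bigr => s0 _.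
  by rewrite -rvE /rv mulr_sumr; apply: eq_bigr => a _; rewrite mulrA.
have tge k : 0 <= gamma ^+ k * \sum_(s0 : S) \sum_(a : A) state_dist Tr d0 pi0 k s0 * pi0 s0 a * Rs s0 a.
  by rewrite cE mulr_ge0 ?exprn_ge0 // (sd_distr hTr hd0 hp0 k).1.
have hle : u t.+1 <= limn u.
  apply: nondecreasing_cvgn_le; last exact: (cvgP _ hc).
  move=> n m hnm; rewrite /u (big_cat_nat (leq0n n) hnm) /= lerDl.
  by apply: sumr_ge0 => k _; exact: tge.
have : limn u = mu0 s by rewrite -hJ'.
move=> hl; rewrite hl in hle; apply: lt_le_trans hle.
rewrite /u big_nat_recr //= cE; apply: ltr_pwDr.
  by rewrite mulr_gt0 // exprn_gt0.
by apply: sumr_ge0 => k _; exact: tge.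
Qed.


Definition Lin (R : realType) (S A : finType) (w D : S -> A -> R) : R := \sum_s \sum_a D s a * w s a.
Definition Wz (R : realType) (S A : finType) (D : S -> A -> R) := forall s, \sum_a D s a = 0.

Lemma Lin2 (R : realType) (S A : finType) (w D1 D2 : S -> A -> R) (x y : R) :
  Lin w (fun s a => x * D1 s a + y * D2 s a) = x * Lin w D1 + y * Lin w D2.
Proof.
rewrite /Lin !mulr_sumr -big_split; apply: eq_bigr => s _.
rewrite !mulr_sumr -big_split; apply: eq_bigr => a _ /=; ring.
Qed.

Lemma Wz2 (R : realType) (S A : finType) (D1 D2 : S -> A -> R) (x y : R) :
  Wz D1 -> Wz D2 -> Wz (fun s a => x * D1 s a + y * D2 s a).
Proof.
move=> h1 h2 s; rewrite big_split /= -!mulr_sumr h1 h2; ring.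
Qed.

Lemma codir (R : realType) (S A : finType) (wf wg : S -> A -> R) :
  (forall D, Wz D -> ~ (Lin wf D < 0 /\ 0 < Lin wg D)) ->
  (forall D, Wz D -> Lin wf D = 0) \/
  exists c, 0 <= c /\ forall D, Wz D -> Lin wg D = c * Lin wf D.
Proof.
move=> hn.
case: (pselect (forall D, Wz D -> Lin wf D = 0)) => [h|h]; [by left|right].
have [D0 [hW0 hL0]] : exists D0, Wz D0 /\ Lin wf D0 != 0.
  apply/not_existsP => hne; apply: h => D hD; case: (eqVneq (Lin wf D) 0) => // hL; exfalso; apply: (hne D); by split.
pose k := (Lin wf D0)^-1.
pose D1 := fun s a => k * D0 s a + 0 * D0 s a.
have hW1 : Wz D1 by exact: Wz2.
have hL1 : Lin wf D1 = 1 by rewrite /D1 Lin2 mul0r addr0 mulVf.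
pose c := Lin wg D1.
exists c; split.
  have := hn (fun s a => (-1) * D1 s a + 0 * D1 s a) (Wz2 _ _ hW1 hW1).
  rewrite (Lin2 wf) (Lin2 wg) hL1 -/c => hh; rewrite leNgt; apply/negP => hc; apply: hh; split; lra.
move=> D hD.
pose u := Lin wg D - c * Lin wf D.
suff : u = 0 by rewrite /u => /eqP; rewrite subr_eq0 => /eqP.
case: (eqVneq u 0) => // hu; exfalso.
have hc1 : 0 < `|c| + 1 by have := normr_ge0 c; lra.
pose t := u ^+ 2 / (`|c| + 1).
have hu2 : 0 < u ^+ 2 by rewrite exprn_even_gt0.
have ht : 0 < t by rewrite /t divr_gt0.
have htc : t * c < u ^+ 2.
  apply: le_lt_trans (_ : t * `|c| < _); first by rewrite ler_pM2l // ler_norm.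
  have -> : u ^+ 2 = t * (`|c| + 1) by rewrite /t mulrVK // unitfE; apply/lt0r_neq0.
  by rewrite ltr_pM2l // ltrDl.
pose D2 := fun s a => u * D s a + (- (u * Lin wf D) - t) * D1 s a.
have hW2 : Wz D2 by exact: Wz2.
apply: (hn D2 hW2); rewrite (Lin2 wf) (Lin2 wg) hL1 -/c; split.
  rewrite mulr1; lra.
have -> : u * Lin wg D + (- (u * Lin wf D) - t) * c = u * u - t * c by rewrite /u; ring.
rewrite -expr2; lra.
Qed.

Definition Edir (R : realType) (S A : finType) (s : S) (a a' : A) : S -> A -> R :=
  fun s0 a0 => (s0 == s)%:R * ((a0 == a)%:R - (a0 == a')%:R).

Lemma Wz_E (R : realType) (S A : finType) (s : S) (a a' : A) : Wz (Edir R s a a').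
Proof.
move=> s0; rewrite /Edir -mulr_sumr sumrB.
rewrite (eq_bigr (fun a0 => 1 * (a0 == a)%:R)) ?sum_delta; last by move=> *; rewrite mul1r.
rewrite (eq_bigr (fun a0 => 1 * (a0 == a')%:R)) ?sum_delta; last by move=> *; rewrite mul1r.
by rewrite subrr mulr0.
Qed.

Lemma Lin_E (R : realType) (S A : finType) (w : S -> A -> R) s (a a' : A) :
  Lin w (Edir R s a a') = w s a - w s a'.
Proof.
rewrite /Lin /Edir.
rewrite (eq_bigr (fun s0 => (\sum_a0 ((a0 == a)%:R - (a0 == a')%:R) * w s0 a0) * (s0 == s)%:R)); last first.
  by move=> s0 _; rewrite mulr_suml; apply: eq_bigr => a0 _; ring.
rewrite sum_delta; under eq_bigr do rewrite mulrBl.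
rewrite sumrB; rewrite (eq_bigr (fun a0 => w s a0 * (a0 == a)%:R)) ?sum_delta; last by move=> *; rewrite mulrC.
by rewrite (eq_bigr (fun a0 => w s a0 * (a0 == a')%:R)) ?sum_delta; last by move=> *; rewrite mulrC.
Qed.

Lemma const_zero (R : realType) (S A : finType) (pi0 pi1 : S -> A -> R) (mu0 mu1 : S -> R) (h : S -> A -> R) :
  is_policy pi0 -> is_policy pi1 ->
  (forall s, mu0 s = 0 -> mu1 s = 0) ->
  (forall s a a', mu0 s * h s a = mu0 s * h s a') ->
  \sum_s mu1 s * \sum_a (pi1 s a - pi0 s a) * h s a = 0.
Proof.
move=> hp0 hp1 hz hc; apply: big1 => s _.
have [e0|ne0] := eqVneq (mu0 s) 0; first by rewrite hz // mul0r.
case: (pickP (@predT A)) => [a0 _|hno]; last first.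
  by rewrite big_pred0 ?mulr0 // => a; rewrite hno.
rewrite (eq_bigr (fun a => (pi1 s a - pi0 s a) * h s a0)); last first.
  by move=> a _; congr (_ * _); apply: (mulfI ne0); exact: hc.
by rewrite -mulr_suml sumrB (hp0 s).2 (hp1 s).2 subrr mul0r mulr0.
Qed.

Lemma small_eps (R : realType) (C d : R) : 0 <= C -> 0 < d ->
  exists2 e0 : R, 0 < e0 & forall e, 0 < e -> e <= e0 -> e * C < d.
Proof.
move=> hC hd; exists (d / (C + 1)); first by rewrite divr_gt0 // ltr_pwDr.
have hC1 : 0 < C + 1 by lra.
move=> e he hle; apply: (@le_lt_trans _ _ (d / (C + 1) * C)); first by apply: ler_wpM2r.
apply: (@lt_le_trans _ _ (d / (C + 1) * (C + 1))).
  by rewrite ltr_pM2l ?divr_gt0 //; lra.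
by rewrite mulrVK // unitfE; apply/lt0r_neq0.
Qed.


Lemma err_bound (R : realType) (S : finType) (e h : S -> R) :
  `|\sum_s e s * h s| <= (\sum_s `|e s|) * \sum_s `|h s|.
Proof.
apply: le_trans (ler_norm_sum _ _ _) _; rewrite mulr_suml; apply: ler_sum => s _.
rewrite normrM; apply: ler_wpM2l => //; by rewrite [X in _ <= X](bigD1 s) //= lerDl sumr_ge0.
Qed.

Lemma diff_form (R : realType) (S A : finType) (p0 p1 : S -> A -> R) (mu0 mu1 : S -> R) (q D : S -> A -> R) (eps : R) :
  (forall s a, p1 s a - p0 s a = eps * D s a) ->
  \sum_s mu1 s * \sum_a (p1 s a - p0 s a) * q s a =
  eps * (Lin (fun s a => mu0 s * q s a) D + \sum_s (mu1 s - mu0 s) * \sum_a D s a * q s a).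
Proof.
move=> hd; rewrite /Lin -big_split /= mulr_sumr; apply: eq_bigr => s _.
under eq_bigr do rewrite hd -mulrA.
have -> : \sum_a D s a * (mu0 s * q s a) = mu0 s * \sum_a D s a * q s a by rewrite mulr_sumr; apply: eq_bigr => a _; ring.
rewrite -mulr_sumr; ring.
Qed.

Unset Implicit Arguments.

Theorem mainTheorem13 (R : realType) (S A : finType)
  (Tr : S -> A -> S -> R) (d0 : S -> R) (gamma : R)
  (hA : (1 < #|A|)%N)
  (hTr : is_transition Tr) (hd0 : is_distr d0)
  (hgamma0 : 0 <= gamma) (hgamma1 : gamma < 1)
  (hreach : all_reachable Tr d0)
  (Pi : set (S -> A -> R))
  (hPi : forall pi, Pi pi -> is_policy pi)
  (hopen : exists U : set (S -> A -> R),
     [/\ U `<=` Pi, U !=set0 & open_in_Pplus U]) :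
  forall Rw Rw' : S -> A -> R,
    ~ trivial_on Pi (J Tr d0 gamma Rw) ->
    ~ trivial_on Pi (J Tr d0 gamma Rw') ->
    ~ equivalent_on Pi (J Tr d0 gamma Rw) (J Tr d0 gamma Rw') ->
    hackable Tr d0 gamma Pi Rw Rw'.
Proof.
move=> Rw Rw' hnf hng hne.
case: hopen => U [hUPi [p0 hp0U] [hUP hUo]].
have [hp0 hpos] := hUP p0 hp0U.
have [eU heU hball] := hUo p0 hp0U.
have [Vf hVf] := exists_V hTr hp0 hgamma0 hgamma1 (rv p0 Rw).
have [Vg hVg] := exists_V hTr hp0 hgamma0 hgamma1 (rv p0 Rw').
have [mu0 hmu0] := exists_mu hTr hp0 hgamma0 hgamma1 d0.
pose qf := qv Tr gamma Rw Vf.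
pose qg := qv Tr gamma Rw' Vg.
pose wf s a := mu0 s * qf s a.
pose wg s a := mu0 s * qg s a.
have hz : forall (p1 : S -> A -> R) (mu1 : S -> R), is_policy p1 ->
    (forall s', mu1 s' = d0 s' + gamma * \sum_s mu1 s * Pm Tr p1 s s') ->
    forall s, mu0 s = 0 -> mu1 s = 0.
  case: (eqVneq gamma 0) => [g0|gn0].
    move=> p1 mu1 _ hmu1 s h; rewrite hmu1 g0 mul0r addr0.
    by rewrite hmu0 g0 mul0r addr0 in h.
  have gp : 0 < gamma by rewrite lt0r gn0 hgamma0.
  move=> p1 mu1 _ _ s h; have := mu_pos hTr hd0 hreach hp0 hpos gp hgamma1 hmu0 s.
  by rewrite h ltxx.
case: (pselect (exists D, [/\ Wz D, Lin wf D < 0 & 0 < Lin wg D])) => [[D [hWD hLf hLg]]|hno].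
  pose M := 1 + \sum_s \sum_a `|D s a|.
  have hM1e : M - 1 = \sum_s \sum_a `|D s a| by rewrite /M; ring.
  have hDM s a : `|D s a| <= M - 1.
    rewrite hM1e; apply: le_trans (_ : \sum_a `|D s a| <= _).
      by rewrite [X in _ <= X](bigD1 a) //= lerDl sumr_ge0.
    by rewrite [X in _ <= X](bigD1 s) //= lerDl; apply: sumr_ge0 => *; apply: sumr_ge0.
  have hM1 : 0 <= M - 1 by rewrite hM1e; apply: sumr_ge0 => *; apply: sumr_ge0.
  pose T := \sum_s \sum_a (p0 s a)^-1.
  have hTp s a : (p0 s a)^-1 <= T.
    apply: le_trans (_ : \sum_a (p0 s a)^-1 <= _).
      rewrite [X in _ <= X](bigD1 a) //= lerDl; apply: sumr_ge0 => a' _.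
      by rewrite invr_ge0 ltW.
    rewrite [X in _ <= X](bigD1 s) //= lerDl; apply: sumr_ge0 => s' _; apply: sumr_ge0 => a' _.
    by rewrite invr_ge0 ltW.
  have hT0 : 0 <= T by apply: sumr_ge0 => s _; apply: sumr_ge0 => a _; rewrite invr_ge0 ltW.
  pose m := (T + 1)^-1.
  have hmpos : 0 < m by rewrite invr_gt0; lra.
  have hm s a : m <= p0 s a.
    have h := hTp s a.
    rewrite -[X in _ <= X](invrK (p0 s a)) lef_pV2 ?posrE ?invr_gt0 //; lra.
  pose hfs s := \sum_a D s a * qf s a.
  pose Hf := \sum_s `|hfs s|.
  pose hgs s := \sum_a D s a * qg s a.
  pose Hg := \sum_s `|hgs s|.
  pose B1 := \sum_s' `|\sum_s mu0 s * \sum_a D s a * Tr s a s'|.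
  have hB1 : 0 <= B1 by apply: sumr_ge0 => *.
  have hg1' : 0 < 1 - gamma by lra.
  pose K := gamma * B1 / (1 - gamma).
  have hK : 0 <= K by rewrite /K divr_ge0 ?mulr_ge0 // ltW.
  have hHf : 0 <= Hf by apply: sumr_ge0 => *.
  have hHg : 0 <= Hg by apply: sumr_ge0 => *.
  have hM0 : 0 <= M by lra.
  have [e1 he1 H1] := small_eps hM0 heU.
  have [e2 he2 H2] := small_eps hM0 hmpos.
  have hLf' : 0 < - Lin wf D by lra.
  have [e3 he3 H3] := small_eps (mulr_ge0 hK hHf) hLf'.
  have [e4 he4 H4] := small_eps (mulr_ge0 hK hHg) hLg.
  pose eps := Num.min (Num.min e1 e2) (Num.min e3 e4).
  have heps : 0 < eps by rewrite /eps !lt_min he1 he2 he3 he4.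
  have I1 : eps * M < eU by apply: H1 => //; rewrite /eps !ge_min lexx.
  have I2 : eps * M < m by apply: H2 => //; rewrite /eps !ge_min lexx !orbT.
  have I3 : eps * (K * Hf) < - Lin wf D by apply: H3 => //; rewrite /eps !ge_min lexx !orbT.
  have I4 : eps * (K * Hg) < Lin wg D by apply: H4 => //; rewrite /eps !ge_min lexx !orbT.
  pose p1 := fun s a => p0 s a + eps * D s a.
  have dpi s a : p1 s a - p0 s a = eps * D s a by rewrite /p1; ring.
  have hedm s a : `|eps * D s a| <= eps * (M - 1).
    by rewrite normrM gtr0_norm // ler_wpM2l // ltW.
  have hMM : eps * (M - 1) <= eps * M by rewrite ler_wpM2l ?ltW //; lra.
  have hpos1 s a : 0 < p1 s a.
    have := hedm s a; rewrite ler_norml => /andP [h _].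
    have := hm s a; rewrite /p1; lra.
  have hpol1 : is_policy p1.
    move=> s; split; first by move=> a; exact: ltW.
    by rewrite /p1 big_split /= -mulr_sumr hWD mulr0 addr0 (hp0 s).2.
  have hd1 : pdist p0 p1 < eU.
    apply: le_lt_trans (_ : eps * (M - 1) < eU); last by lra.
    rewrite /pdist; apply: bigmax_le; first by rewrite mulr_ge0 // ltW.
    by move=> sa _; rewrite distrC dpi; exact: hedm.
  have hU1 : U p1 by apply: hball => //; split.
  have [mu1 hmu1] := exists_mu hTr hpol1 hgamma0 hgamma1 d0.
  pose E := \sum_s `|mu1 s - mu0 s|.
  have hE : E <= eps * K.
    have hob := @occ_bound _ _ (Pm Tr p0) (Pm Tr p1) d0 mu0 mu1 gamma
      (fun s s' => (Pm_distr hTr hpol1 s).1 s') (fun s => (Pm_distr hTr hpol1 s).2)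
      hgamma0 hgamma1 hmu0 hmu1.
    have eB : \sum_s' `|\sum_s mu0 s * (Pm Tr p1 s s' - Pm Tr p0 s s')| = eps * B1.
      rewrite /B1 mulr_sumr; apply: eq_bigr => s' _.
      rewrite -(gtr0_norm heps) -normrM mulr_sumr; congr `|_|; apply: eq_bigr => s _.
      rewrite /Pm -sumrB (eq_bigr (fun a => eps * (D s a * Tr s a s'))); last first.
        by move=> a _; rewrite -mulrBl dpi mulrA.
      rewrite -mulr_sumr; ring.
    rewrite eB in hob.
    rewrite -(ler_pM2r hg1') /K mulrA divfK; last by apply/lt0r_neq0.
    move: hob; rewrite -/E; lra.
  have herr (h : S -> R) : `|\sum_s (mu1 s - mu0 s) * h s| <= eps * K * \sum_s `|h s|.
    apply: le_trans (err_bound _ _) _; apply: ler_wpM2r; [by apply: sumr_ge0 | exact: hE].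
  exists p0, p1; split; [exact: hUPi | exact: hUPi | |].
  - have df := PDL hTr hd0 hp0 hpol1 hgamma0 hgamma1 hVf hmu1.
    rewrite (@diff_form _ _ _ p0 p1 mu0 mu1 qf D eps dpi) in df.
    have := herr hfs; rewrite -/Hf => he.
    have hneg : Lin wf D + \sum_s (mu1 s - mu0 s) * hfs s < 0.
      move: he; rewrite ler_norml => /andP [_ he].
      have : eps * K * Hf = eps * (K * Hf) by ring.
      lra.
    have : eps * (Lin wf D + \sum_s (mu1 s - mu0 s) * hfs s) < 0 by rewrite pmulr_rlt0.
    rewrite -df; lra.
  - have dg := PDL hTr hd0 hp0 hpol1 hgamma0 hgamma1 hVg hmu1.
    rewrite (@diff_form _ _ _ p0 p1 mu0 mu1 qg D eps dpi) in dg.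
    have := herr hgs; rewrite -/Hg => he.
    have hposg : 0 < Lin wg D + \sum_s (mu1 s - mu0 s) * hgs s.
      move: he; rewrite ler_norml => /andP [he _].
      have : eps * K * Hg = eps * (K * Hg) by ring.
      lra.
    have : 0 < eps * (Lin wg D + \sum_s (mu1 s - mu0 s) * hgs s) by rewrite mulr_gt0.
    rewrite -dg; lra.
have hn : forall D, Wz D -> ~ (Lin wf D < 0 /\ 0 < Lin wg D).
  by move=> D hD [h1 h2]; apply: hno; exists D.
case: (codir hn) => [hf0|[c [hc0 hc]]].
  exfalso; apply: hnf => pi pi' hpi hpi'.
  have key : forall p, Pi p -> J Tr d0 gamma Rw p = J Tr d0 gamma Rw p0.
    move=> p hp; have hpp := hPi p hp.
    have [mu1 hmu1] := exists_mu hTr hpp hgamma0 hgamma1 d0.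
    apply/eqP; rewrite -subr_eq0; apply/eqP.
    rewrite (PDL hTr hd0 hp0 hpp hgamma0 hgamma1 hVf hmu1).
    apply: (const_zero hp0 hpp (hz p mu1 hpp hmu1)) => s a a'.
    have := hf0 _ (Wz_E R s a a'); rewrite Lin_E => /eqP; rewrite subr_eq0 => /eqP.
    by [].
  by rewrite !key.
have key : forall p, Pi p -> J Tr d0 gamma Rw' p - J Tr d0 gamma Rw' p0 =
    c * (J Tr d0 gamma Rw p - J Tr d0 gamma Rw p0).
  move=> p hp; have hpp := hPi p hp.
  have [mu1 hmu1] := exists_mu hTr hpp hgamma0 hgamma1 d0.
  rewrite (PDL hTr hd0 hp0 hpp hgamma0 hgamma1 hVf hmu1).
  rewrite (PDL hTr hd0 hp0 hpp hgamma0 hgamma1 hVg hmu1).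
  have hcst : forall s a a', mu0 s * (qg s a - c * qf s a) = mu0 s * (qg s a' - c * qf s a').
    move=> s a a'.
    have := hc _ (Wz_E R s a a'); rewrite !Lin_E /wg /wf => H.
    have e : mu0 s * (qg s a - c * qf s a) - mu0 s * (qg s a' - c * qf s a') =
       (mu0 s * qg s a - mu0 s * qg s a') - c * (mu0 s * qf s a - mu0 s * qf s a') by ring.
    by apply/eqP; rewrite -subr_eq0 e H subrr.
  have h0 := @const_zero _ _ _ p0 p mu0 mu1 (fun s a => qg s a - c * qf s a) hp0 hpp (hz p mu1 hpp hmu1) hcst.
  apply/eqP; rewrite -subr_eq0; apply/eqP; rewrite -[RHS]h0.
  rewrite mulr_sumr -sumrB; apply: eq_bigr => s _.
  rewrite mulrCA -mulrBr; congr (_ * _); rewrite mulr_sumr -sumrB; apply: eq_bigr => a _ /=; rewrite /qg /qf; ring.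
case: (eqVneq c 0) => [c0|cn0].
  exfalso; apply: hng => pi pi' hpi hpi'.
  have := key pi hpi; have := key pi' hpi'; rewrite c0 !mul0r => /eqP; rewrite subr_eq0 => /eqP ->.
  by move/eqP; rewrite subr_eq0 => /eqP ->.
have cp : 0 < c by rewrite lt0r cn0 hc0.
exfalso; apply: hne => pi pi' hpi hpi'.
have e : J Tr d0 gamma Rw' pi - J Tr d0 gamma Rw' pi' =
   c * (J Tr d0 gamma Rw pi - J Tr d0 gamma Rw pi').
  have := key pi hpi; have := key pi' hpi' => h1 h2.
  have -> : J Tr d0 gamma Rw' pi - J Tr d0 gamma Rw' pi' =
    (J Tr d0 gamma Rw' pi - J Tr d0 gamma Rw' p0) - (J Tr d0 gamma Rw' pi' - J Tr d0 gamma Rw' p0) by ring.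
  rewrite h1 h2; ring.
rewrite -(subr_ge0 (J Tr d0 gamma Rw' pi')) -(subr_ge0 (J Tr d0 gamma Rw pi')) e pmulr_rge0 //.
Qed.
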